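(* Let $G$ be a finite connected graph and let $e_1,\dots,e_c$ be its loop-edges. For $\underline n=(n_1,\dots,n_c)$ with each $n_i$ a positive integer, let $G^{(\underline n)}$ be the refinement of $G$ obtained by inserting $n_i$ new vertices in the interior of $e_i$ for each $i$, and let $\sigma^*:\operatorname{Div}(G)\to\operatorname{Div}(G^{(\underline n)})$ be the map extending divisors by $0$ on the new vertices. Then for every $D\in\operatorname{Div}(G)$, $$r^{\#}_G(D)=r_{G^{(\underline n)}}(\sigma^*D).$$
   Context: Graphs are finite and connected, loops and multiple edges allowed. $\operatorname{Div}(G)$ is the free abelian group on $V(G)$. Define $(v\cdot w)$ as the number of edges joining $v,w$ if $v\ne w$, and $(v\cdot v)=-\operatorname{val}(v)+2\operatorname{loop}(v)$ (valency with loops counted twice). $T_v=\sum_w(v\cdot w)w$, $\operatorname{Prin}(G)$ is the subgroup generated by the $T_v$, $D\sim D'$ iff $D-D'\in\operatorname{Prin}(G)$. The rank $r_G(D)$ is $-1$ if no effective divisor is equivalent to $D$, and otherwise the maximum $k\ge0$ such that for every effective $E$ of degree $k$ some effective divisor is equivalent to $D-E$. Let $\widehat G$ be the graph obtained from $G$ by inserting exactly one new vertex in the interior of every loop-edge, and $\sigma^*:\operatorname{Div}(G)\to\operatorname{Div}(\widehat G)$ extension by zero; define $r^{\#}_G(D):=r_{\widehat G}(\sigma^*D)$. *)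

(* Defs.v *)
From mathcomp Require Import all_boot all_order all_algebra.
From Stdlib Require Import ClassicalEpsilon.
Set Implicit Arguments. Unset Strict Implicit. Unset Printing Implicit Defensive.
Import Order.TTheory GRing.Theory Num.Theory.

(* A finite multigraph (loops and multiple edges allowed): vertices are the
   natural numbers 0 .. nV-1; edges is the list of edges, each given by its
   two endpoints (a loop is an edge (v,v); repeated entries = multiple edges). *)
Record graph := Graph { nV : nat; edges : seq (nat * nat) }.

Definition wf_graph (G : graph) : Prop :=
  all (fun e => (e.1 < nV G) && (e.2 < nV G)) (edges G).

Definition is_loop (e : nat * nat) : bool := e.1 == e.2.

Definition adj (G : graph) (x y : nat) : bool :=
  has (fun e => ((e.1 == x) && (e.2 == y)) || ((e.1 == y) && (e.2 == x))) (edges G).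

Definition connected (G : graph) : Prop :=
  0 < nV G /\
  forall v w, v < nV G -> w < nV G ->
    exists p : seq nat, path (adj G) v p /\ last v p = w.

(* Divisors: functions nat -> int, only the values on vertices (< nV) matter. *)
Definition divisor := nat -> int.

Local Open Scope ring_scope.

Definition nedges (G : graph) (v w : nat) : nat :=
  count (fun e => ((e.1 == v) && (e.2 == w)) || ((e.1 == w) && (e.2 == v))) (edges G).
Definition valency (G : graph) (v : nat) : nat :=
  \sum_(e <- edges G) ((e.1 == v) + (e.2 == v))%N.
Definition nloops (G : graph) (v : nat) : nat :=
  count (fun e => (e.1 == v) && (e.2 == v)) (edges G).

Definition dot (G : graph) (v w : nat) : int :=
  if v == w then - (valency G v)%:Z + 2 * (nloops G v)%:Z
  else (nedges G v w)%:Z.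

Definition T (G : graph) (v : nat) : divisor := fun w => dot G v w.

Definition lin_equiv (G : graph) (D D' : divisor) : Prop :=
  exists c : nat -> int, forall w, (w < nV G)%N ->
    D w - D' w = \sum_(v < nV G) c v * T G v w.

Definition effective (G : graph) (E : divisor) : Prop :=
  forall w, (w < nV G)%N -> 0 <= E w.

Definition deg (G : graph) (E : divisor) : int := \sum_(w < nV G) E w.

Definition rank_ge (G : graph) (D : divisor) (k : nat) : Prop :=
  forall E : divisor, effective G E -> deg G E = k%:Z ->
    exists F : divisor, effective G F /\ lin_equiv G (fun w => D w - E w) F.

Definition is_rank (G : graph) (D : divisor) (r : int) : Prop :=
  (~ (exists F : divisor, effective G F /\ lin_equiv G D F) /\ r = -1)
  \/ ((exists F : divisor, effective G F /\ lin_equiv G D F) /\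
      exists k : nat, r = k%:Z /\ rank_ge G D k /\
        forall k' : nat, rank_ge G D k' -> (k' <= k)%N).

Definition rank (G : graph) (D : divisor) : int :=
  epsilon (inhabits 0) (fun r => is_rank G D r).

(* Subdivision: insert m j new vertices in the interior of the j-th edge.
   New vertices get the indices nV G, nV G + 1, ...; old vertices keep theirs. *)
Definition sub_offset (G : graph) (m : nat -> nat) (j : nat) : nat :=
  (nV G + \sum_(0 <= i < j) m i)%N.

Definition sub_edges (G : graph) (m : nat -> nat) (j : nat) (e : nat * nat)
  : seq (nat * nat) :=
  let k := m j in let o := sub_offset G m j in
  if k == 0%N then [:: e]
  else (e.1, o) :: [seq ((o + i)%N, (o + i).+1) | i <- iota 0 k.-1]
         ++ [:: ((o + k.-1)%N, e.2)].

Definition subdivide (G : graph) (m : nat -> nat) : graph :=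
  Graph (nV G + \sum_(0 <= j < size (edges G)) m j)%N
        (flatten [seq sub_edges G m j (nth (0%N, 0%N) (edges G) j)
                 | j <- iota 0 (size (edges G))]).

Definition loop_counts (G : graph) (n : nat -> nat) : nat -> nat :=
  fun j => if is_loop (nth (0%N, 0%N) (edges G) j) then n j else 0%N.

Definition refine_loops (G : graph) (n : nat -> nat) : graph :=
  subdivide G (loop_counts G n).

Definition hat (G : graph) : graph := refine_loops G (fun _ => 1%N).

Definition sigma (G : graph) (D : divisor) : divisor :=
  fun x => if (x < nV G)%N then D x else 0.

Definition rank_sharp (G : graph) (D : divisor) : int := rank (hat G) (sigma G D).

(* Main.v *)
Require Import Defs.
From mathcomp Require Import all_boot all_order all_algebra.
From mathcomp Require Import zify ring lra.
From Stdlib Require Import ClassicalEpsilon FunctionalExtensionality PropExtensionality.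
Set Implicit Arguments. Unset Strict Implicit. Unset Printing Implicit Defensive.
Import Order.TTheory GRing.Theory Num.Theory.
Local Open Scope ring_scope.



Definition flow (c : nat -> int) (e : nat * nat) (w : nat) : int :=
  if e.1 == e.2 then 0 else
  (if e.1 == w then c e.2 - c e.1 else 0) + (if e.2 == w then c e.1 - c e.2 else 0).

Definition lap (Y : graph) (c : nat -> int) (w : nat) : int :=
  \sum_(e <- edges Y) flow c e w.

Definition bi (b : bool) : int := if b then 1 else 0.

Definition dotE (e : nat * nat) (v w : nat) : int :=
  if e.1 == e.2 then 0 else
  bi (v == e.1) * bi (e.2 == w) + bi (v == e.2) * bi (e.1 == w)
  - bi ((v:nat) == w) * (bi (e.1 == w) + bi (e.2 == w)).

Lemma dot_sum G v w : dot G v w = \sum_(e <- edges G) dotE e v w.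
Proof.
rewrite /dot /valency /nloops /nedges.
case: (v =P w) => [<-|hvw].
  elim: (edges G) => [|[a b] s IH]; first by rewrite !big_nil.
  rewrite !big_cons /= -IH /dotE /= eqxx.
  move: (\sum_(j <- s) _)%N (count _ s) => x y.
  rewrite /bi; repeat (case: eqP => /= ?); lia.
elim: (edges G) => [|[a b] s IH]; first by rewrite !big_nil.
rewrite !big_cons /= -IH /dotE /=.
have -> : (v == w) = false by apply/eqP.
move: (count _ s) => x.
rewrite /bi; repeat (case: eqP => /= ?); lia.
Qed.

Lemma sum_pick N (c : nat -> int) x : (x < N)%N ->
  \sum_(v < N) c v * bi ((v:nat) == x) = c x.
Proof.
move=> hx; rewrite (bigD1 (Ordinal hx)) //= /bi eqxx mulr1 big1 ?addr0 // => i hi.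
case: eqP => [e|]; last by rewrite mulr0.
by exfalso; move/eqP: hi; apply; apply: val_inj.
Qed.

Lemma sum_dotE N (c : nat -> int) e w : (e.1 < N)%N -> (e.2 < N)%N ->
  \sum_(v < N) c v * dotE e v w = flow c e w.
Proof.
case: e => a b /= ha hb; rewrite /dotE /flow /=.
case: eqP => [_|hab]; first by rewrite big1 // => i _; rewrite mulr0.
have E : forall v : 'I_N, c v * (bi ((v:nat) == a) * bi (b == w) + bi ((v:nat) == b) * bi (a == w) -
   bi ((v:nat) == w) * (bi (a == w) + bi (b == w))) =
   (c v * bi ((v:nat) == a)) * bi (b == w) + (c v * bi ((v:nat) == b)) * bi (a == w)
   - (c v * bi ((v:nat) == w)) * (bi (a == w) + bi (b == w)).
  by move=> v; ring.
rewrite (eq_bigr _ (fun v _ => E v)) !big_split /= -!big_distrl /= sumrN -big_distrl /=.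
rewrite (sum_pick c ha) (sum_pick c hb).
have hw : (\sum_(i < N) c i * bi ((i:nat) == w)) * (bi (a == w) + bi (b == w)) =
   c a * bi (a == w) + c b * bi (b == w).
  case: (a =P w) => [<-|haw]; first by rewrite sum_pick // /bi; case: eqP => //; lia.
  case: (b =P w) => [<-|hbw]; first by rewrite sum_pick // /bi; lia.
  by rewrite /bi /= mulr0 !mulr0 addr0.
rewrite hw /bi; repeat (case: eqP => /= ?); lia.
Qed.

Lemma lapE Y (c : nat -> int) w : wf_graph Y ->
  \sum_(v < nV Y) c v * T Y v w = lap Y c w.
Proof.
move=> wf; rewrite /T /lap.
under eq_bigr do rewrite dot_sum big_distrr.
rewrite exchange_big /= big_seq [RHS]big_seq; apply: eq_bigr => e he.
move/allP: wf => /(_ e he) /andP [h1 h2].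
by apply: sum_dotE.
Qed.

Definition ej G j := nth (0%N, 0%N) (edges G) j.
Definition pv (b o k i : nat) : nat := if (i == 0%N) || (k < i)%N then b else (o + i.-1)%N.
Definition lapC (L : nat) (f : nat -> int) (p : nat) : int :=
  f (if p == 0%N then L.-1 else p.-1) + f (if p == L.-1 then 0%N else p.+1) - 2 * f p.

Lemma lapX_split G n c w :
  lap (refine_loops G n) c w = lap G c w +
  \sum_(0 <= j < size (edges G) | is_loop (ej G j))
     \sum_(e <- sub_edges G (loop_counts G n) j (ej G j)) flow c e w.
Proof.
rewrite /lap /refine_loops /subdivide /= big_flatten /= big_map /ej.
rewrite [in RHS](big_nth (0%N,0%N)).
have -> : iota 0 (size (edges G)) = index_iota 0 (size (edges G)) by rewrite /index_iota subn0.
rewrite (bigID (fun j => is_loop (nth (0%N,0%N) (edges G) j))) /= [X in X = _]addrC.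
rewrite [\sum_(0 <= i < _) flow _ _ _](bigID (fun j => is_loop (nth (0%N,0%N) (edges G) j))) /=.
rewrite [X in _ = X + _ + _]big1 ?add0r; last first.
  by move=> j h; rewrite /flow; move: h; rewrite /is_loop => ->.
congr (_ + _); apply: eq_bigr => j /negbTE h.
by rewrite /sub_edges /loop_counts -/(ej G j) h /= big_seq1.
Qed.

Lemma sub_edges_loop G cnt j e : is_loop e -> (0 < cnt j)%N ->
  sub_edges G cnt j e =
  [seq (pv e.1 (sub_offset G cnt j) (cnt j) i, pv e.1 (sub_offset G cnt j) (cnt j) i.+1)
    | i <- iota 0 (cnt j).+1].
Proof.
rewrite /is_loop /sub_edges => /eqP he.
case: (cnt j) => [//|k] _.
set o := sub_offset G cnt j.
have -> : iota 0 k.+2 = 0%N :: map (addn 1) (iota 0 k) ++ [:: k.+1].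
  by rewrite -[k.+2]addn1 iotaD /= -(iotaDl 1 0).
rewrite /= map_cat -map_comp /pv /= addn0 ltnn ltnSn /= he; congr (_ :: _ ++ _).
  apply/eq_in_map => i; rewrite mem_iota /= => hi.
  have -> : (k.+1 < 1 + i)%N = false by lia.
  have -> : (k.+1 < (1 + i).+1)%N = false by lia.
  by rewrite add1n /= addnS.
Qed.

Lemma cyc_sum (b o k : nat) (c : nat -> int) w : (b < o)%N -> (0 < k)%N ->
  \sum_(e <- [seq (pv b o k i, pv b o k i.+1) | i <- iota 0 k.+1]) flow c e w =
  \sum_(0 <= p < k.+1) bi (pv b o k p == w) * lapC k.+1 (fun i => c (pv b o k i)) p.
Proof.
move=> hbo hk.
set f := fun i => c (pv b o k i).
pose A i := bi (pv b o k i == w) * (f i.+1 - f i).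
pose B p := bi (pv b o k p == w) * (f p.-1 - f p).
have hf : forall i, (i < k.+1)%N -> flow c (pv b o k i, pv b o k i.+1) w = A i + B i.+1.
  move=> i hi; rewrite /flow /A /B /f /=.
  have -> : (pv b o k i == pv b o k i.+1) = false.
    apply/eqP; rewrite /pv; case: (i =P 0%N) => [->|hi0] /=.
      by rewrite ltnNge hk /=; lia.
    case: ltnP => h1; case: ltnP => h2 /=; lia.
  by rewrite /bi; do 2 case: eqP => _; lia.
rewrite big_map (_ : iota 0 k.+1 = index_iota 0 k.+1); last by rewrite /index_iota subn0.
rewrite (eq_big_nat _ _ (F2 := fun i => A i + B i.+1)); last first.
  by move=> i /andP [_ hi]; apply: hf.
have hnext : forall p, (p < k.+1)%N -> f (if p == k.+1.-1 then 0%N else p.+1) = f p.+1.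
  move=> p hp; case: eqP => //= ->; rewrite /f /pv /=; by rewrite ltnSn.
rewrite [RHS](eq_big_nat _ _ (F2 := fun p => A p + (bi (pv b o k p == w) *
   (f (if p == 0%N then k.+1.-1 else p.-1) - f p)))); last first.
  move=> p /andP [_ hp]; rewrite /lapC hnext // /A; ring.
rewrite !big_split /=; congr (_ + _).
rewrite [LHS]big_nat_recr // [RHS]big_ltn // big_add1 /= addrC; congr (_ + _).
by rewrite /B /f /pv /= ltnSn.
Qed.

Definition off G n j := sub_offset G (loop_counts G n) j.

Lemma off_ge G n j : (nV G <= off G n j)%N.
Proof. by rewrite /off /sub_offset leq_addr. Qed.

Lemma wf_nth G j : wf_graph G -> (j < size (edges G))%N ->
  ((ej G j).1 < nV G)%N /\ ((ej G j).2 < nV G)%N.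
Proof.
move=> /allP wf hj; have /wf /andP [h1 h2] := mem_nth (0%N,0%N) hj.
by split.
Qed.

Lemma lapX G n c w : wf_graph G ->
  (forall j, (j < size (edges G))%N -> is_loop (ej G j) -> (0 < n j)%N) ->
  lap (refine_loops G n) c w = lap G c w +
  \sum_(0 <= j < size (edges G) | is_loop (ej G j))
    \sum_(0 <= p < (n j).+1) bi (pv (ej G j).1 (off G n j) (n j) p == w) *
        lapC (n j).+1 (fun i => c (pv (ej G j).1 (off G n j) (n j) i)) p.
Proof.
move=> wf hpos; rewrite lapX_split; congr (_ + _).
rewrite big_nat_cond [RHS]big_nat_cond; apply: eq_bigr => j /andP [/andP [_ hj] hl].
have hc : loop_counts G n j = n j by rewrite /loop_counts -/(ej G j) hl.
rewrite sub_edges_loop //; last by rewrite hc; apply: hpos.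
rewrite hc -/(off G n j) cyc_sum //; last by apply: hpos.
have [h1 _] := wf_nth wf hj.
exact: (leq_trans h1 (off_ge G n j)).
Qed.

Lemma sum_pick_nat N (g : nat -> int) q : (q < N)%N ->
  \sum_(0 <= p < N) bi (p == q) * g p = g q.
Proof.
move=> hq; rewrite big_mkord -(sum_pick g hq); apply: eq_bigr => i _; exact: mulrC.
Qed.

Lemma pv_eq b o k p w : (b < o)%N -> (p < k.+1)%N -> (o <= w < o + k)%N ->
  (pv b o k p == w) = (p == (w - o).+1).
Proof.
move=> hbo hp /andP [h1 h2]; rewrite /pv.
case: (p =P 0%N) => [->|hp0] /=; first by rewrite (_ : (b == w) = false) //; lia.
have hpk : (p <= k)%N by lia.
rewrite ltnNge hpk /=; apply/eqP/eqP; lia.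
Qed.

Lemma sum_pv_new b o k w (g : nat -> int) : (b < o)%N -> (o <= w < o + k)%N ->
  \sum_(0 <= p < k.+1) bi (pv b o k p == w) * g p = g (w - o).+1.
Proof.
move=> hbo hw; rewrite (eq_big_nat _ _ (F2 := fun p => bi (p == (w - o).+1) * g p)).
  by apply: sum_pick_nat; lia.
by move=> p /andP [_ hp]; rewrite pv_eq.
Qed.

Lemma sum_pv_old b o k w (g : nat -> int) : (w < o)%N ->
  \sum_(0 <= p < k.+1) bi (pv b o k p == w) * g p = bi (b == w) * g 0%N.
Proof.
move=> hw; rewrite big_ltn // big1_seq ?addr0 // => p /andP [_].
rewrite mem_index_iota => /andP [h1 h2]; rewrite /pv.
have -> : (p == 0%N) = false by lia.
have hpk : (p <= k)%N by lia.
rewrite ltnNge hpk /=.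
have -> : (o + p.-1 == w) = false by lia.
by rewrite /bi mul0r.
Qed.

Lemma sum_pv_none b o k w (g : nat -> int) : b != w -> ((w < o) || (o + k <= w))%N ->
  \sum_(0 <= p < k.+1) bi (pv b o k p == w) * g p = 0.
Proof.
move=> hb hw; rewrite big1_seq // => p /andP [_].
rewrite mem_index_iota => /andP [h1 h2]; rewrite /pv.
case: (p =P 0%N) => [_|hp0] /=; first by rewrite (negbTE hb) /bi mul0r.
have hpk : (p <= k)%N by lia.
rewrite ltnNge hpk /=.
have -> : (o + p.-1 == w) = false by lia.
by rewrite /bi mul0r.
Qed.

Lemma lap_out Y c w : wf_graph Y -> (nV Y <= w)%N -> lap Y c w = 0.
Proof.
move=> /allP wf hw; rewrite /lap big1_seq // => e /andP [_ he].
have /andP [] := wf e he.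
case: e {he} => a b /= h1 h2.
rewrite /flow /=; case: eqP => // _.
have -> : (a == w) = false by lia.
by have -> : (b == w) = false by lia.
Qed.

Lemma lap_ext Y c c' w : wf_graph Y -> (forall v, (v < nV Y)%N -> c v = c' v) ->
  lap Y c w = lap Y c' w.
Proof.
move=> /allP wf hc; rewrite /lap big_seq [RHS]big_seq; apply: eq_bigr => e he.
have /andP [h1 h2] := wf e he.
by rewrite /flow !hc.
Qed.



Lemma sum_next K (f : nat -> int) :
  \sum_(0 <= p < K.+1) f (if p == K then 0%N else p.+1) = \sum_(0 <= p < K.+1) f p.
Proof.
rewrite big_nat_recr //= eqxx big_nat_recl //= addrC; congr (_ + _).
by apply: eq_big_nat => p /andP [_ hp]; rewrite (_ : (p == K) = false) //; lia.
Qed.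

Lemma sum_prev K (f : nat -> int) :
  \sum_(0 <= p < K.+1) f (if p == 0%N then K else p.-1) = \sum_(0 <= p < K.+1) f p.
Proof.
by rewrite big_nat_recl //= big_nat_recr //= addrC.
Qed.

Lemma lapC_sum K f : \sum_(0 <= p < K.+1) lapC K.+1 f p = 0.
Proof.
rewrite /lapC /= !big_split /= sum_next sum_prev sumrN -big_distrr /=; ring.
Qed.

Lemma tele K (f : nat -> int) : \sum_(0 <= q < K) (f q - f q.+1) = f 0%N - f K.
Proof.
elim: K => [|K IH]; first by rewrite big_geq // subrr.
by rewrite big_nat_recr //= IH; ring.
Qed.

Lemma lapC_wsum K f : \sum_(0 <= p < K.+1) p%:Z * lapC K.+1 f p = K.+1%:Z * (f 0%N - f K).
Proof.
have e1 : \sum_(0 <= p < K.+1) p%:Z * f (if p == K then 0%N else p.+1) =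
   \sum_(0 <= q < K) q%:Z * f q.+1 + K%:Z * f 0%N.
  rewrite big_nat_recr //= eqxx; congr (_ + _).
  by apply: eq_big_nat => p /andP [_ hp]; rewrite (_ : (p == K) = false) //; lia.
have e2 : \sum_(0 <= p < K.+1) p%:Z * f (if p == 0%N then K else p.-1) =
   \sum_(0 <= q < K) q.+1%:Z * f q.
  by rewrite big_nat_recl //= mul0r add0r.
have e3 : \sum_(0 <= p < K.+1) p%:Z * f p = \sum_(0 <= q < K) q%:Z * f q + K%:Z * f K.
  by rewrite big_nat_recr.
have e4 : \sum_(0 <= p < K.+1) p%:Z * f p = \sum_(0 <= q < K) q.+1%:Z * f q.+1.
  by rewrite big_nat_recl //= mul0r add0r.
have e5 : \sum_(0 <= q < K) (f q - f q.+1) =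
   \sum_(0 <= q < K) q.+1%:Z * f q + \sum_(0 <= q < K) q%:Z * f q.+1
   - \sum_(0 <= q < K) q%:Z * f q - \sum_(0 <= q < K) q.+1%:Z * f q.+1.
  rewrite (eq_bigr (fun q => q.+1%:Z * f q + q%:Z * f q.+1 - q%:Z * f q - q.+1%:Z * f q.+1)).
    by rewrite !sumrB big_split.
  by move=> q _; rewrite intS; ring.
have -> : \sum_(0 <= p < K.+1) p%:Z * lapC K.+1 f p =
   \sum_(0 <= p < K.+1) p%:Z * f (if p == 0%N then K else p.-1)
   + \sum_(0 <= p < K.+1) p%:Z * f (if p == K then 0%N else p.+1)
   - \sum_(0 <= p < K.+1) p%:Z * f p - \sum_(0 <= p < K.+1) p%:Z * f p.
  rewrite (eq_bigr (fun p => p%:Z * f (if p == 0%N then K else p.-1) + p%:Z * f (if p == K then 0%N else p.+1) - p%:Z * f p - p%:Z * f p)).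
    by rewrite !sumrB big_split.
  by move=> p _; rewrite /lapC /=; ring.
rewrite e1 e2 [X in _ - X - _]e3 e4.
have t := tele K f; rewrite e5 in t.
rewrite intS; transitivity ((f 0%N - f K) + K%:Z * (f 0%N - f K)); last by ring.
rewrite -[in X in _ = X + _]t; ring.
Qed.

Definition cycf L (m : nat -> int) (t : int) (p : nat) : int :=
  \sum_(0 <= x < L) m x * ((p - x)%N)%:Z + t * p%:Z.

Lemma relu2 p x : (0 < p)%N ->
  ((p.-1 - x)%N)%:Z + ((p.+1 - x)%N)%:Z - 2 * ((p - x)%N)%:Z = bi (x == p).
Proof. move=> hp; rewrite /bi; case: eqP => h; lia. Qed.

Lemma cycf_lin L m t q : (L <= q.+1)%N ->
  cycf L m t q = q%:Z * \sum_(0 <= x < L) m x - \sum_(0 <= x < L) x%:Z * m x + t * q%:Z.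
Proof.
move=> hq; rewrite /cycf; congr (_ + _).
rewrite mulr_sumr -sumrB; apply: eq_big_nat => x /andP [_ hx].
have -> : ((q - x)%N)%:Z = q%:Z - x%:Z by lia.
ring.
Qed.

Lemma cycf0 L m t : cycf L m t 0 = 0.
Proof. by rewrite /cycf big1 ?add0r ?mulr0 // => x _; rewrite sub0n mulr0. Qed.

Lemma cycf_lap K m t : \sum_(0 <= x < K.+2) m x = 0 ->
  \sum_(0 <= x < K.+2) x%:Z * m x = K.+2%:Z * t ->
  forall p, (p < K.+2)%N -> lapC K.+2 (cycf K.+2 m t) p = m p.
Proof.
move=> hs hw p hp.
have hL : cycf K.+2 m t K.+2 = 0.
  rewrite cycf_lin // hs hw; ring.
have hL1 : cycf K.+2 m t K.+1 = - t.
  rewrite cycf_lin // hs hw intS intS; ring.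
have h2 : forall q, (0 < q)%N -> (q < K.+2)%N ->
    cycf K.+2 m t q.-1 + cycf K.+2 m t q.+1 - 2 * cycf K.+2 m t q = m q.
  move=> q hq0 hq; rewrite /cycf.
  transitivity (\sum_(0 <= x < K.+2) m x * (((q.-1 - x)%N)%:Z + ((q.+1 - x)%N)%:Z
      - 2 * ((q - x)%N)%:Z) + t * ((q.-1)%:Z + (q.+1)%:Z - 2 * q%:Z)).
    rewrite [in RHS](eq_bigr (fun x => m x * ((q.-1 - x)%N)%:Z + m x * ((q.+1 - x)%N)%:Z
      - 2 * (m x * ((q - x)%N)%:Z))); last by move=> x _; ring.
    rewrite !sumrB big_split /= -mulr_sumr; ring.
  rewrite (_ : (q.-1)%:Z + (q.+1)%:Z - 2 * q%:Z = 0); last by lia.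
  rewrite mulr0 addr0.
  under eq_bigr do rewrite relu2 //.
  rewrite (eq_bigr (fun x => bi (x == q) * m x)); last by move=> x _; exact: mulrC.
  exact: sum_pick_nat.
rewrite /lapC /=.
case: (p =P 0%N) => [->|hp0].
  rewrite /= cycf0 hL1 /cycf.
  rewrite big_ltn // big1_seq; last first.
    move=> x /andP [_]; rewrite mem_index_iota => /andP [h1 _].
    by rewrite (_ : (1 - x)%N = 0%N) ?mulr0 //; lia.
  rewrite subn0 mulr1 addr0 mulr1; ring.
case: (p =P K.+1) => [->|hpK].
  by rewrite cycf0 -hL; apply: h2.
by apply: h2 => //; lia.
Qed.

Lemma lapC_0 K f : lapC K.+1 f 0%N = - \sum_(1 <= p < K.+1) lapC K.+1 f p.
Proof.
have := lapC_sum K f; rewrite big_ltn // => h.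
by apply/eqP; rewrite -addr_eq0 h.
Qed.

Lemma cyc_nonneg K f : (forall p, (0 < p < K.+1)%N -> lapC K.+1 f p <= 0) ->
  0 <= lapC K.+1 f 0%N.
Proof.
move=> h; rewrite lapC_0 oppr_ge0 big_nat_cond.
by apply: sumr_le0 => p /andP [/andP [h1 h2] _]; apply: h; lia.
Qed.

Lemma cyc_two K f : (forall p, (0 < p < K.+2)%N -> lapC K.+2 f p <= 0) ->
  lapC K.+2 f 1%N <= -1 -> 2 <= lapC K.+2 f 0%N.
Proof.
move=> h h1.
set mu := lapC K.+2 f.
have hW := lapC_wsum K.+1 f; rewrite -/mu big_ltn //= mul0r add0r in hW.
have hS := lapC_0 K.+1 f; rewrite -/mu in hS.
have up : \sum_(1 <= p < K.+2) p%:Z * mu p <= -1.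
  rewrite big_ltn // mul1r.
  have : \sum_(2 <= p < K.+2) p%:Z * mu p <= 0.
    rewrite big_nat_cond; apply: sumr_le0 => p /andP [/andP [hp1 hp2] _].
    rewrite pmulr_rle0; last by lia.
    by apply: h; lia.
  move=> hle; apply: (le_trans (lerD h1 hle)); by rewrite addr0.
have lo : \sum_(1 <= p < K.+2) K.+1%:Z * mu p <= \sum_(1 <= p < K.+2) p%:Z * mu p.
  rewrite big_nat_cond [X in _ <= X]big_nat_cond.
  apply: ler_sum => p /andP [/andP [hp1 hp2] _].
  have hm : mu p <= 0 by apply: h; lia.
  rewrite -subr_ge0 -mulrBl.
  apply: mulr_le0; last exact: hm.
  lia.
rewrite -mulr_sumr in lo.
rewrite hW in up lo.
rewrite leNgt; apply/negP => hlt.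
have hm0 : mu 0%N <= 1 by rewrite -/mu in hlt; lia.
rewrite hS in hm0.
move: up lo hm0.
set z := f 0%N - f K.+1.
set s := \sum_(1 <= p < K.+2) mu p.
move=> up lo hm0.
have hs : K.+1%:Z * (-1) <= K.+1%:Z * s by rewrite ler_pM2l //; lia.
case: (lerP 0 z) => hz.
  have : 0 <= K.+2%:Z * z by apply: mulr_ge0.
  lia.
have : K.+2%:Z * z <= K.+2%:Z * (-1) by rewrite ler_pM2l //; lia.
lia.
Qed.



Lemma off_mono G n j j' : (j < j')%N ->
  (off G n j + loop_counts G n j <= off G n j')%N.
Proof.
move=> hj; rewrite /off /sub_offset -addnA leq_add2l.
rewrite [\sum_(0 <= i < j') _](big_cat_nat _ (n := j.+1)) //= big_nat_recr //=.
exact: leq_addr.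
Qed.

Lemma off_end G n j : (j < size (edges G))%N ->
  (off G n j + loop_counts G n j <= nV (refine_loops G n))%N.
Proof.
move=> hj; rewrite /off /sub_offset /refine_loops /subdivide /= -addnA leq_add2l.
rewrite [\sum_(0 <= i < size _) _](big_cat_nat _ (n := j.+1)) //= ?big_nat_recr //=; first exact: leq_addr.
Qed.

Lemma block_ex G n w : (nV G <= w < nV (refine_loops G n))%N ->
  exists j, [/\ (j < size (edges G))%N, (off G n j <= w)%N & (w < off G n j + loop_counts G n j)%N].
Proof.
rewrite /refine_loops /subdivide /=.
elim: (size (edges G)) => [|M IH]; first by rewrite big_geq //; lia.
move=> /andP [h1 h2].
case: (ltnP w (nV G + \sum_(0 <= j < M) loop_counts G n j)) => h3.
  have [j [hj hj1 hj2]] : exists j, [/\ (j < M)%N, (off G n j <= w)%N & (w < off G n j + loop_counts G n j)%N].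
    by apply: IH; rewrite h1 h3.
  by exists j; split => //; lia.
exists M; split => //.
move: h2; rewrite big_nat_recr //= /off /sub_offset; lia.
Qed.

Lemma deg_split_gen (E : nat -> int) N (cnt : nat -> nat) M :
  \sum_(0 <= w < N + \sum_(0 <= i < M) cnt i) E w =
  \sum_(0 <= w < N) E w +
  \sum_(0 <= j < M) \sum_(0 <= i < cnt j) E (N + \sum_(0 <= i < j) cnt i + i)%N.
Proof.
elim: M => [|M IH].
  have -> : \sum_(0 <= i < 0) cnt i = 0%N by rewrite big_geq.
  by rewrite [\sum_(0 <= j < 0) _]big_geq // addr0 addn0.
rewrite big_nat_recr //= [in RHS]big_nat_recr //= addrA -IH addnA.
rewrite (big_cat_nat _ (n := (N + \sum_(0 <= i < M) cnt i)%N)) //=; last by lia.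
congr (_ + _).
rewrite -{1}(add0n (N + _)%N) big_addn.
rewrite (_ : (N + \sum_(0 <= i < M) cnt i + cnt M - (N + \sum_(0 <= i < M) cnt i))%N = cnt M); last by lia.
by apply: eq_big_nat => i _; rewrite addnC.
Qed.

Lemma deg_split G n (E : divisor) :
  deg (refine_loops G n) E = deg G E +
  \sum_(0 <= j < size (edges G)) \sum_(0 <= i < loop_counts G n j) E (off G n j + i)%N.
Proof.
rewrite /deg /refine_loops /subdivide /= -!(big_mkord (fun _ => true)).
by rewrite deg_split_gen.
Qed.

Lemma wf_refine G n : wf_graph G -> wf_graph (refine_loops G n).
Proof.
move=> wf; apply/allP => e /flatten_mapP [j].
rewrite mem_iota add0n => /andP [_ hj].
have [ha hb] := wf_nth wf hj.
have hN := off_end n hj; simpl in hN.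
have hge := off_ge G n j.
rewrite /sub_edges -/(ej G j) -/(off G n j).
case: eqP => [_ |hk].
  by rewrite inE => /eqP -> /=; apply/andP; split; lia.
rewrite inE => /orP [/eqP -> /=|]; first by apply/andP; split; lia.
rewrite mem_cat => /orP [/mapP [i]|].
  by rewrite mem_iota => /andP [_ hi] -> /=; apply/andP; split; lia.
by rewrite inE => /eqP -> /=; apply/andP; split; lia.
Qed.

Definition cf G n (c : nat -> int) j := fun i => c (pv (ej G j).1 (off G n j) (n j) i).

Lemma lapX_old G n c w : wf_graph G ->
  (forall j, (j < size (edges G))%N -> is_loop (ej G j) -> (0 < n j)%N) ->
  (w < nV G)%N ->
  lap (refine_loops G n) c w = lap G c w +
  \sum_(0 <= j < size (edges G) | is_loop (ej G j))
     bi ((ej G j).1 == w) * lapC (n j).+1 (cf G n c j) 0%N.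
Proof.
move=> wf hpos hw; rewrite lapX //; congr (_ + _); apply: eq_bigr => j _.
rewrite sum_pv_old //; apply: (leq_trans hw); exact: off_ge.
Qed.

Lemma cnt_pos G n j : (0 < loop_counts G n j)%N ->
  is_loop (ej G j) /\ loop_counts G n j = n j.
Proof. by rewrite /loop_counts -/(ej G j); case: ifP. Qed.

Lemma lapX_new G n c w j : wf_graph G ->
  (forall j, (j < size (edges G))%N -> is_loop (ej G j) -> (0 < n j)%N) ->
  (j < size (edges G))%N -> (off G n j <= w < off G n j + loop_counts G n j)%N ->
  lap (refine_loops G n) c w = lapC (n j).+1 (cf G n c j) (w - off G n j).+1.
Proof.
move=> wf hpos hj hw.
have [hl hc] : is_loop (ej G j) /\ loop_counts G n j = n j by apply: cnt_pos; lia.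
have hN := off_ge G n j.
rewrite lapX // lap_out ?add0r //; last by lia.
have hjr : j \in index_iota 0 (size (edges G)) by rewrite mem_index_iota; lia.
rewrite big_mkcond (bigD1_seq j) ?iota_uniq //=.
rewrite hl [X in _ + X]big1_seq ?addr0.
  rewrite sum_pv_new //; first by have [h1 _] := wf_nth wf hj; lia.
  by rewrite -hc.
move=> j' /andP [hjj']; rewrite mem_index_iota => hj'; case: ifP => // hl'.
have [h1 _] := wf_nth wf (j := j') ltac:(lia).
apply: sum_pv_none; first by apply/eqP; lia.
have hc' : loop_counts G n j' = n j' by rewrite /loop_counts -/(ej G j') hl'.
case: (ltnP j' j) => hjj.
  have := off_mono G n hjj; rewrite hc'; lia.
have hjj2 : (j < j')%N by move: hjj'; move: hjj; lia.
have := off_mono G n hjj2.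
lia.
Qed.



Lemma sum_unique (m : nat) (P : pred nat) (h : nat -> int) j : (j < m)%N -> P j ->
  (forall j', (j' < m)%N -> j' != j -> ~~ P j') ->
  \sum_(0 <= j' < m | P j') h j' = h j.
Proof.
move=> hj hP hu.
have hjr : j \in index_iota 0 m by rewrite mem_index_iota; lia.
rewrite big_mkcond (bigD1_seq j) ?iota_uniq //= hP [X in _ + X]big1_seq ?addr0 //.
move=> j' /andP [hjj']; rewrite mem_index_iota => hj'.
by rewrite (negbTE (hu j' ltac:(lia) hjj')).
Qed.

Definition hposP G n := forall j, (j < size (edges G))%N -> is_loop (ej G j) -> (0 < n j)%N.

Lemma cnt_loop G n j : hposP G n -> (j < size (edges G))%N -> is_loop (ej G j) ->
  loop_counts G n j = n j.
Proof. by move=> _ _ h; rewrite /loop_counts -/(ej G j) h. Qed.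

Lemma block_unique G n w j j' : hposP G n -> (j < size (edges G))%N ->
  (j' < size (edges G))%N -> is_loop (ej G j') -> j' != j ->
  (off G n j <= w < off G n j + loop_counts G n j)%N ->
  ~~ (off G n j' <= w < off G n j' + n j')%N.
Proof.
move=> hp hj hj' hl hne hw.
have hc' := cnt_loop hp hj' hl.
case: (ltnP j' j) => hjj.
  have := off_mono G n hjj; rewrite hc'; lia.
have hjj2 : (j < j')%N by move: hne; move: hjj; lia.
have := off_mono G n hjj2; lia.
Qed.

Lemma mod_ex (W : int) (L : nat) : (0 < L)%N ->
  exists r : nat, exists t : int, (r < L)%N /\ W + r%:Z = L%:Z * t.
Proof.
move=> hL.
have hL' : (L%:Z != 0 :> int) by rewrite eqz_nat; lia.
exists `|((- W) %% L%:Z)%Z|%N, (- ((- W) %/ L%:Z)%Z).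
have h0 := modz_ge0 (- W) hL'.
have h1 : ((- W) %% L%:Z)%Z < L%:Z by apply: ltz_pmod; lia.
have he := divz_eq (- W) L%:Z.
split; first by lia.
rewrite gez0_abs //.
move: he; set q := ((- W) %/ L%:Z)%Z; set r := ((- W) %% L%:Z)%Z => he.
have -> : r = - W - q * L%:Z by rewrite [X in _ = X - _]he; ring.
ring.
Qed.

Lemma sum_one (m : nat) (P : pred nat) (h : nat -> int) j : (j < m)%N ->
  (forall j', (j' < m)%N -> j' != j -> P j' -> h j' = 0) ->
  \sum_(0 <= j' < m | P j') h j' = if P j then h j else 0.
Proof.
move=> hj hu.
have hjr : j \in index_iota 0 m by rewrite mem_index_iota; lia.
rewrite big_mkcond (bigD1_seq j) ?iota_uniq //= [X in _ + X]big1_seq ?addr0 //.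
move=> j' /andP [hjj']; rewrite mem_index_iota => hj'.
by case: ifP => // hP; apply: hu => //; lia.
Qed.

Definition Qp G D (k : nat) : Prop := forall (E0 : divisor) (s : nat -> bool), effective G E0 ->
  deg G E0 + \sum_(0 <= j < size (edges G) | is_loop (ej G j) && s j) 1 = k%:Z ->
  exists F, effective G F /\ lin_equiv G (fun w => D w - E0 w - 2 *
     \sum_(0 <= j < size (edges G) | is_loop (ej G j) && s j) bi ((ej G j).1 == w)) F.

Definition Edef G n (E0 : divisor) (s : nat -> bool) : divisor := fun w =>
  if (w < nV G)%N then E0 w
  else \sum_(0 <= j < size (edges G) | is_loop (ej G j) && s j) bi (w == off G n j).

Lemma Edef_new G n E0 s j i : hposP G n -> (j < size (edges G))%N -> is_loop (ej G j) ->
  (i < n j)%N -> Edef G n E0 s (off G n j + i) = bi (s j) * bi (i == 0%N).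
Proof.
move=> hp hj hl hi; rewrite /Edef.
have hN := off_ge G n j.
have -> : (off G n j + i < nV G)%N = false by lia.
rewrite (@sum_one _ _ _ j hj).
  rewrite hl /=; case: (s j); rewrite /bi ?mul1r ?mul0r //.
  by case: eqP; case: eqP => //; lia.
move=> j' hj' hne /andP [hl' _].
have := block_unique hp hj hj' hl' hne (w := (off G n j + i)%N).
rewrite cnt_loop // => /(_ ltac:(lia)) h.
rewrite /bi; case: eqP => // e; move: h; rewrite -e; have := hp j' hj' hl'; lia.
Qed.

Lemma Edef_deg G n E0 s : hposP G n ->
  deg (refine_loops G n) (Edef G n E0 s) =
  deg G E0 + \sum_(0 <= j < size (edges G) | is_loop (ej G j) && s j) 1.
Proof.
move=> hp; rewrite deg_split; congr (_ + _).
  by apply: eq_bigr => w _; rewrite /Edef ltn_ord.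
rewrite [RHS]big_mkcond; apply: eq_big_nat => j /andP [_ hj].
case hl: (is_loop (ej G j)) => /=.
  rewrite cnt_loop //.
  rewrite (eq_big_nat _ _ (F2 := fun i => bi (i == 0%N) * bi (s j))); last first.
    by move=> i /andP [_ hi]; rewrite Edef_new // mulrC.
  rewrite sum_pick_nat; last by apply: hp.
  by rewrite /bi; case: (s j).
have -> : loop_counts G n j = 0%N by rewrite /loop_counts -/(ej G j) hl.
by rewrite big_geq.
Qed.

Lemma effective_Edef G n E0 s : effective G E0 -> effective (refine_loops G n) (@Edef G n E0 s).
Proof.
move=> hE w _; rewrite /Edef; case: ifP => hw; first by apply: hE.
by apply: sumr_ge0 => j _; rewrite /bi; case: eqP.
Qed.

Lemma dir2 G n D (k : nat) : wf_graph G -> hposP G n ->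
  rank_ge (refine_loops G n) (sigma G D) k -> Qp G D k.
Proof.
move=> wf hp hr E0 s hE0 hdeg.
have wfX := wf_refine n wf.
have [F [hF [c hc]]] := hr (Edef G n E0 s) (@effective_Edef G n E0 s hE0)
   ltac:(by rewrite Edef_deg).
have hc' : forall w, (w < nV (refine_loops G n))%N ->
    sigma G D w - Edef G n E0 s w - F w = lap (refine_loops G n) c w.
  by move=> w hw; rewrite -lapE // -hc.
have hNX : (nV G <= nV (refine_loops G n))%N by rewrite /refine_loops /subdivide /= leq_addr.
have cyc : forall j, (j < size (edges G))%N -> is_loop (ej G j) ->
    forall p, (0 < p < (n j).+1)%N ->
    lapC (n j).+1 (cf G n c j) p <= - (bi (s j) * bi (p == 1%N)).
  move=> j hj hl p hp1.
  have hcj := cnt_loop hp hj hl.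
  have hend := off_end n hj.
  have hw : (off G n j <= off G n j + p.-1 < off G n j + loop_counts G n j)%N by lia.
  have := hc' (off G n j + p.-1)%N ltac:(lia).
  rewrite (lapX_new c wf hp hj hw).
  have -> : ((off G n j + p.-1 - off G n j).+1 = p)%N by lia.
  rewrite Edef_new //; last by lia.
  have -> : sigma G D (off G n j + p.-1)%N = 0.
    rewrite /sigma; have := off_ge G n j; case: ltnP => //; lia.
  have hF0 := hF (off G n j + p.-1)%N ltac:(lia).
  have -> : (p.-1 == 0%N) = (p == 1%N) by lia.
  move=> <-; lia.
have mu : forall j, (j < size (edges G))%N -> is_loop (ej G j) ->
    2 * bi (s j) <= lapC (n j).+1 (cf G n c j) 0%N.
  move=> j hj hl; have := hp j hj hl; have := cyc j hj hl.
  case: (n j) => [//|K] hK _.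
  case hs: (s j); rewrite /bi /=.
    rewrite mulr1; apply: cyc_two.
      by move=> p hp1; apply: (le_trans (hK p hp1)); rewrite oppr_le0 /bi; case: (s j); case: (p == 1%N).
    by have := hK 1%N isT; rewrite hs /bi /= mulr1.
  rewrite mulr0; apply: cyc_nonneg => p hp1.
  by apply: (le_trans (hK p hp1)); rewrite hs /bi mul0r oppr0.
pose F0 w := D w - E0 w - 2 * \sum_(0 <= j < size (edges G) | is_loop (ej G j) && s j)
   bi ((ej G j).1 == w) - lap G c w.
exists F0; split; last first.
  by exists c => w hw; rewrite lapE // /F0; ring.
move=> w hw.
have := hc' w ltac:(lia); rewrite /sigma /Edef hw lapX_old // => h.
have -> : F0 w = F w + (\sum_(0 <= j < size (edges G) | is_loop (ej G j))
     bi ((ej G j).1 == w) * lapC (n j).+1 (cf G n c j) 0%N -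
     2 * \sum_(0 <= j < size (edges G) | is_loop (ej G j) && s j) bi ((ej G j).1 == w)).
  rewrite /F0; move: h; lra.
apply: addr_ge0; first by apply: hF; lia.
rewrite big_mkcondr /= mulr_sumr -sumrB big_nat_cond.
apply: sumr_ge0 => j /andP [/andP [_ hj] hl].
have := mu j hj hl.
rewrite /bi; case: eqP => _; case: (s j); lra.
Qed.

Lemma lapC_ext L f f' p : (0 < L)%N -> (forall i, (i < L)%N -> f i = f' i) -> (p < L)%N ->
  lapC L f p = lapC L f' p.
Proof.
move=> hL h hp; rewrite /lapC.
have -> : f (if p == 0%N then L.-1 else p.-1) = f' (if p == 0%N then L.-1 else p.-1).
  by apply: h; case: eqP => /= hh; lia.
have -> : f (if p == L.-1 then 0%N else p.+1) = f' (if p == L.-1 then 0%N else p.+1).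
  by apply: h; case: eqP => /= hh; lia.
by rewrite h.
Qed.

Lemma lapC_shift L (a : int) g p : lapC L (fun i => a + g i) p = lapC L g p.
Proof. rewrite /lapC; ring. Qed.

Definition modr (W : int) (L : nat) : nat := `|((- W) %% L%:Z)%Z|%N.
Definition modt (W : int) (L : nat) : int := - ((- W) %/ L%:Z)%Z.

Lemma modrP W L : (0 < L)%N -> (modr W L < L)%N /\ W + (modr W L)%:Z = L%:Z * modt W L.
Proof.
move=> hL.
have hL' : (L%:Z != 0 :> int) by rewrite eqz_nat; lia.
have h0 := modz_ge0 (- W) hL'.
have h1 : ((- W) %% L%:Z)%Z < L%:Z by apply: ltz_pmod; lia.
have he := divz_eq (- W) L%:Z.
rewrite /modr /modt; split; first by lia.
rewrite gez0_abs //.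
move: he; set q := ((- W) %/ L%:Z)%Z; set r := ((- W) %% L%:Z)%Z => he.
have -> : r = - W - q * L%:Z by rewrite [X in _ = X - _]he; ring.
ring.
Qed.

Lemma modr0 L : modr 0 L = 0%N.
Proof. by rewrite /modr oppr0 mod0z. Qed.

Lemma dir1 G n D (k : nat) : wf_graph G -> hposP G n ->
  Qp G D k -> rank_ge (refine_loops G n) (sigma G D) k.
Proof.
move=> wf hp hQ E hE hdeg.
have wfX := wf_refine n wf.
set m := size (edges G).
set N := nV G.
have hNX : (N <= nV (refine_loops G n))%N by rewrite /refine_loops /subdivide /= leq_addr.
pose ee j := \sum_(0 <= i < loop_counts G n j) E (off G n j + i)%N.
pose s j := ee j != 0.
have hEnew : forall j i, (j < m)%N -> (i < loop_counts G n j)%N -> 0 <= E (off G n j + i)%N.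
  move=> j i hj hi; apply: hE; have := off_end n hj; lia.
have ee0 : forall j, (j < m)%N -> 0 <= ee j.
  move=> j hj; rewrite /ee big_nat_cond; apply: sumr_ge0 => i /andP [/andP [_ hi] _].
  exact: hEnew.
pose E0 w := E w + \sum_(0 <= j < m | is_loop (ej G j) && s j)
   bi ((ej G j).1 == w) * (ee j - 1).
have hE0 : effective G E0.
  move=> w hw; apply: addr_ge0; first by apply: hE; lia.
  rewrite big_nat_cond; apply: sumr_ge0 => j /andP [/andP [_ hj] /andP [_ hs]].
  apply: mulr_ge0; first by rewrite /bi; case: eqP.
  have := ee0 j hj; move: hs; rewrite /s; lia.
have hdeg0 : deg G E0 + \sum_(0 <= j < m | is_loop (ej G j) && s j) 1 = k%:Z.
  rewrite -hdeg deg_split /deg /E0 big_split /= -addrA; congr (_ + _).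
  rewrite exchange_big /= -big_split /=.
  rewrite [RHS](bigID (fun j => is_loop (ej G j) && s j)) /=.
  rewrite [X in _ = _ + X]big1 ?addr0; last first.
    move=> j /negbTE; rewrite /ee.
    case hl: (is_loop (ej G j)) => /= hs.
      by move: hs; rewrite /s; move/negbT/negPn/eqP.
    have -> : loop_counts G n j = 0%N by rewrite /loop_counts -/(ej G j) hl.
    by rewrite big_geq.
  rewrite big_nat_cond [RHS]big_nat_cond; apply: eq_bigr => j /andP [/andP [_ hj] _].
  have [hb _] := wf_nth wf hj.
  rewrite (eq_bigr (fun v : 'I_N => (ee j - 1) * bi ((v : nat) == (ej G j).1))); last first.
    by move=> v _; rewrite mulrC eq_sym.
  by rewrite (@sum_pick N (fun _ => ee j - 1) _ hb) subrK.
have [F0 [hF0 [c0 hc0]]] := hQ E0 s hE0 hdeg0.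
pose E1 j p := if p == 0%N then 0 else E (off G n j + p.-1)%N.
pose W j := \sum_(0 <= p < (n j).+1) p%:Z * E1 j p.
pose rr j := modr (W j) (n j).+1.
pose tt j := modt (W j) (n j).+1.
pose mm j p := bi (p == 0%N) * (ee j + 1) - bi (p == rr j) - E1 j p.
pose g j := cycf (n j).+1 (mm j) (- tt j).
have sumE1 : forall j, (j < m)%N -> is_loop (ej G j) ->
    \sum_(0 <= p < (n j).+1) E1 j p = ee j.
  move=> j hj hl; rewrite big_nat_recl // /E1 /= add0r /ee cnt_loop //.
have E1ge0 : forall j p, (j < m)%N -> is_loop (ej G j) -> (p < (n j).+1)%N -> 0 <= E1 j p.
  move=> j p hj hl hpj; rewrite /E1; case: eqP => // hp0.
  apply: hEnew => //; rewrite cnt_loop //; lia.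
have hrr : forall j, (rr j < (n j).+1)%N /\ W j + (rr j)%:Z = (n j).+1%:Z * tt j.
  by move=> j; apply: modrP.
have summm : forall j, (j < m)%N -> is_loop (ej G j) -> \sum_(0 <= p < (n j).+1) mm j p = 0.
  move=> j hj hl; rewrite /mm !sumrB sumE1 //.
  rewrite (eq_bigr (fun p => bi (p == 0%N) * (ee j + 1))) // sum_pick_nat //.
  rewrite (eq_bigr (fun p => bi (p == rr j) * 1)); last by move=> p _; rewrite mulr1.
  rewrite sum_pick_nat; last by case: (hrr j).
  ring.
have wsum : forall j, (j < m)%N -> is_loop (ej G j) ->
    \sum_(0 <= p < (n j).+1) p%:Z * mm j p = (n j).+1%:Z * (- tt j).
  move=> j hj hl.
  rewrite (eq_bigr (fun p => bi (p == 0%N) * (p%:Z * (ee j + 1)) - bi (p == rr j) * p%:Z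
     - p%:Z * E1 j p)); last by move=> p _; rewrite /mm; ring.
  rewrite !sumrB sum_pick_nat // sum_pick_nat; last by case: (hrr j).
  rewrite mul0r sub0r -/(W j); have [_ h] := hrr j; rewrite mulrN -h; ring.
have hlap : forall j, (j < m)%N -> is_loop (ej G j) -> forall p, (p < (n j).+1)%N ->
    lapC (n j).+1 (g j) p = mm j p.
  move=> j hj hl; have := hp j hj hl; rewrite /g.
  have := summm j hj hl; have := wsum j hj hl.
  case: (n j) => [//|K] h1 h2 _.
  by apply: cycf_lap.
have rr0 : forall j, (j < m)%N -> is_loop (ej G j) -> ee j = 0 -> rr j = 0%N.
  move=> j hj hl he.
  have hW0 : 0 <= W j.
    rewrite /W big_nat_cond; apply: sumr_ge0 => p /andP [/andP [_ hpj] _].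
    by apply: mulr_ge0 => //; apply: E1ge0.
  have hW1 : W j <= \sum_(0 <= p < (n j).+1) (n j).+1%:Z * E1 j p.
    rewrite /W big_nat_cond [X in _ <= X]big_nat_cond; apply: ler_sum.
    move=> p /andP [/andP [_ hpj] _]; apply: ler_wpM2r; first by apply: E1ge0.
    lia.
  rewrite -mulr_sumr sumE1 // he mulr0 in hW1.
  rewrite /rr (_ : W j = 0); last by lia.
  exact: modr0.
pose c w := if (w < N)%N then c0 w else
  \sum_(0 <= j < m | is_loop (ej G j))
     bi ((off G n j <= w) && (w < off G n j + n j))%N * (c0 (ej G j).1 + g j (w - off G n j).+1).
have hcf : forall j, (j < m)%N -> is_loop (ej G j) -> forall p, (p < (n j).+1)%N ->
    lapC (n j).+1 (cf G n c j) p = mm j p.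
  move=> j hj hl p hpj.
  rewrite -hlap // -[in RHS](lapC_shift _ (c0 (ej G j).1)).
  apply: lapC_ext => // i hi.
  have [hb _] := wf_nth wf hj.
  have hN := off_ge G n j.
  rewrite /cf /pv; case: (i =P 0%N) => [->|hi0] /=.
    by rewrite /c hb /g cycf0 addr0.
  have -> : (n j < i)%N = false by lia.
  rewrite /c /=.
  have -> : (off G n j + i.-1 < N)%N = false by lia.
  rewrite (@sum_one _ _ _ j hj).
  rewrite (_ : is_loop (ej G j) = true) //.
    have -> : ((off G n j + i.-1 - off G n j).+1 = i)%N by lia.
    have hin : (off G n j <= off G n j + i.-1 < off G n j + n j)%N by lia.
    by rewrite /bi hin mul1r.
  move=> j' hj' hne hl'.
  have := block_unique (w := (off G n j + i.-1)%N) hp hj hj' hl' hne.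
  rewrite cnt_loop // => /(_ ltac:(lia)) /negbTE ->.
  by rewrite /bi mul0r.
exists (fun w => sigma G D w - E w - lap (refine_loops G n) c w); split; last first.
  by exists c => w hw; rewrite lapE //; ring.
move=> w hw.
case: (ltnP w N) => hwN.
  have hcw := hc0 w hwN; rewrite lapE // in hcw.
  have hF0w := hF0 w hwN.
  rewrite lapX_old // (@lap_ext _ c c0) //; last by move=> v hv; rewrite /c hv.
  rewrite /sigma hwN.
  have key : \sum_(0 <= j < size (edges G) | is_loop (ej G j))
      bi ((ej G j).1 == w) * lapC (n j).+1 (cf G n c j) 0%N <=
     \sum_(0 <= j < m | is_loop (ej G j) && s j) bi ((ej G j).1 == w) * (ee j - 1)
     + 2 * \sum_(0 <= j < size (edges G) | is_loop (ej G j) && s j) bi ((ej G j).1 == w).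
    rewrite !big_mkcondr /= mulr_sumr -big_split /= big_nat_cond [X in _ <= X]big_nat_cond.
    apply: ler_sum => j /andP [/andP [_ hj] hl].
    rewrite hcf // /mm /E1 /=.
    case hs: (s j).
      have : 0 <= bi (0%N == rr j) by rewrite /bi; case: eqP.
      have : 0 <= bi ((ej G j).1 == w) by rewrite /bi; case: eqP.
      have : bi ((ej G j).1 == w) <= 1 by rewrite /bi; case: eqP.
      rewrite /bi /=; move: (ee j) => x; case: eqP => _; case: eqP => _; lia.
    have he : ee j = 0 by move: hs; rewrite /s => /negbT/negPn/eqP.
    rewrite he rr0 //= /bi; case: eqP => _; lia.
  move: hcw key hF0w; rewrite /E0; lra.
have hwN2 : (nV G <= w)%N by exact: hwN.
have [j [hj hw1 hw2]] := block_ex (G := G) (n := n) (w := w) ltac:(lia).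
have [hl hcj] := cnt_pos (j := j) (n := n) (G := G) ltac:(lia).
rewrite (lapX_new c wf hp hj) ?hw1 ?hw2 //.
rewrite hcf //; last by lia.
rewrite /mm /E1 /= /sigma.
have -> : (w < nV G)%N = false by lia.
have -> : (off G n j + (w - off G n j))%N = w by lia.
rewrite /bi mul0r; case: eqP => _; lra.
Qed.



Lemma rank_ge_iff G n D k : wf_graph G -> hposP G n ->
  rank_ge (refine_loops G n) (sigma G D) k <-> Qp G D k.
Proof. by move=> wf hp; split; [apply: dir2 | apply: dir1]. Qed.

Lemma eff_iff Y D : (exists F, effective Y F /\ lin_equiv Y D F) <-> rank_ge Y D 0.
Proof.
split.
  move=> [F [hF [c hc]]] E hE hdeg; exists F; split => //; exists c => w hw.
  have hE0 : E w = 0.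
    have := @psumr_eq0P _ _ (fun _ => true) (fun i : 'I_(nV Y) => E i).
    move=> /(_ (fun i _ => hE i (ltn_ord i))) /(_ hdeg) /(_ (Ordinal hw) isT) /=.
    done.
  by rewrite hE0 subr0 hc.
move=> h.
have [F [hF [c hc]]] := h (fun _ => 0) (fun _ _ => lexx 0) ltac:(by rewrite /deg big1).
by exists F; split => //; exists c => w hw; rewrite -hc // subr0.
Qed.

Lemma rank_eq X1 D1 X2 D2 : (forall k, rank_ge X1 D1 k <-> rank_ge X2 D2 k) ->
  rank X1 D1 = rank X2 D2.
Proof.
move=> h; rewrite /rank.
have -> : (fun r => is_rank X1 D1 r) = (fun r => is_rank X2 D2 r); last by [].
apply: functional_extensionality => r; apply: propositional_extensionality.
rewrite /is_rank !eff_iff h.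
split.
  case=> [[hn ->]|[he [k [-> [hk hmax]]]]]; [left | right]; split => //.
  exists k; split => //; split; first by apply/h.
  by move=> k' /h; apply: hmax.
case=> [[hn ->]|[he [k [-> [hk hmax]]]]]; [left | right]; split => //.
exists k; split => //; split; first by apply/h.
by move=> k' /h; apply: hmax.
Qed.

Local Close Scope ring_scope.

Theorem proposition3p4 (G : graph) (n : nat -> nat) (D : divisor) :
  wf_graph G -> connected G ->
  (forall j, j < size (edges G) -> is_loop (nth (0, 0) (edges G) j) -> 0 < n j) ->
  rank_sharp G D = rank (refine_loops G n) (sigma G D).
Proof.
move=> wf _ hpos; rewrite /rank_sharp /hat; apply: rank_eq => k.
have h1 := @rank_ge_iff G (fun _ => 1%N) D k wf (fun _ _ _ => isT).
have h2 := @rank_ge_iff G n D k wf hpos.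
by rewrite h1 h2.
Qed.
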